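(* Let $Q$ be a square-free word of length $n\geq 2$. Then for every position $p\in\{1,\dots,n\}$, the number of factors of $Q$ that are almost-squares and start at the $p$-th letter of $Q$ is less than $2\log_{5/4} n$.
   Context: Words are finite sequences of letters. A factor of $Q$ is a contiguous subword; factors starting at the same position are distinguished by their lengths. An extension of a word $W$ over an alphabet $\mathbb{A}$ is a word $W_1xW_2$ with $W=W_1W_2$ ($W_1,W_2$ possibly empty) and $x\in\mathbb{A}$. An almost-square is a word of the form $WW'$ where $W'$ is either an extension of $W$ or is obtained by deleting one letter from $W$. A square is a nonempty word of the form $YY$; a word is square-free if none of its factors is a square. *)

(* Defs.v *)
From mathcomp Require Import all_boot.
From Stdlib Require Import Reals.
Set Implicit Arguments. Unset Strict Implicit.

Definition extension (T : Type) (W W' : seq T) : Prop :=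
  exists (W1 W2 : seq T) (x : T), W = W1 ++ W2 /\ W' = W1 ++ x :: W2.

Definition deletion (T : Type) (W W' : seq T) : Prop :=
  exists (W1 W2 : seq T) (x : T), W = W1 ++ x :: W2 /\ W' = W1 ++ W2.

Definition almost_square (T : Type) (u : seq T) : Prop :=
  exists W W' : seq T, u = W ++ W' /\ (extension W W' \/ deletion W W').

Definition square_free (T : Type) (Q : seq T) : Prop :=
  forall (u Y w : seq T), Q = u ++ Y ++ Y ++ w -> Y = [::].

(* The factor of Q starting at the p-th letter (1-indexed) of length l;
   it exists iff p - 1 + l <= size Q. *)
Definition factor_at (T : Type) (Q : seq T) (p l : nat) : seq T :=
  take l (drop p.-1 Q).

(* Main.v *)
Require Import Defs.
From mathcomp Require Import all_boot.
From Stdlib Require Import Reals.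
From mathcomp Require Import zify.
From Stdlib Require Import Lra.

Section Comb.
Variable T : eqType.
Variable x0 : T.

Definition aspec (w : seq T) (h : nat) :=
  (2 * h + 1 <= size w) /\ exists s t1 t2,
    ((t1 = h /\ t2 = h.+1) \/ (t1 = h.+1 /\ t2 = h)) /\
    forall i, i < h -> i != s ->
      nth x0 w i = nth x0 w (i + (if i < s then t1 else t2)).

Lemma sf_drop (Q : seq T) k : square_free Q -> square_free (drop k Q).
Proof.
move=> sf u Y w E; apply: (sf (take k Q ++ u) Y w).
by rewrite -catA -E cat_take_drop.
Qed.

Lemma sq_nth (w : seq T) j d : square_free w -> 0 < d -> j + 2 * d <= size w ->
  (forall k, k < d -> nth x0 w (j + k) = nth x0 w (j + k + d)) -> False.
Proof.
move=> sf d0 hs hk.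
set Y := take d (drop j w).
have E : w = take j w ++ Y ++ Y ++ drop (j + 2 * d) w.
  have -> : Y ++ Y ++ drop (j + 2 * d) w = drop j w.
    have hY : take d (drop (j + d) w) = Y.
      apply: (@eq_from_nth _ x0).
        rewrite /Y !size_take !size_drop; do 2 case: ltnP => ?; lia.
      move=> i; rewrite size_take size_drop => hi.
      have hid : i < d by move: hi; case: (ltnP d (size w - (j + d))) => ? ?; lia.
      rewrite !nth_take // !nth_drop.
      by rewrite addnAC (hk i hid).
    have -> : drop j w = Y ++ drop (j + d) w.
      by rewrite /Y -{1}(cat_take_drop d (drop j w)) drop_drop addnC.
    rewrite -(cat_take_drop d (drop (j + d) w)) hY drop_drop.
    by congr (_ ++ (_ ++ _)); congr drop; lia.
  by rewrite cat_take_drop.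
have := sf _ _ _ E.
move=> Y0; move: (congr1 size Y0); rewrite /Y size_take size_drop /=; case: ltnP => ? ?; lia.
Qed.


Ltac solve_ifs := repeat match goal with |- context [if ?c then _ else _] =>
  first [ have -> : c = true by apply/idP; lia
        | have -> : c = false by apply/negbTE; rewrite -leqNgt; lia ] end.

Lemma as_spec (w : seq T) l : l <= size w -> almost_square (take l w) ->
  exists h, l = 2 * h + 1 /\ aspec w h.
Proof.
move=> hl [W [W' [E [[W1 [W2 [x [EW EW']]]] | [W1 [W2 [x [EW EW']]]]]]]].
- have sz := congr1 size E; rewrite size_takel // EW EW' !size_cat /= in sz.
  exists (size W1 + size W2); split; first lia.
  split; first lia.
  exists (size W1), (size W1 + size W2), (size W1 + size W2).+1; split; first by left.
  move=> i hi hs.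
  have hl1 : i < l by lia.
  have hl2 : i + (if i < size W1 then size W1 + size W2 else (size W1 + size W2).+1) < l.
    case: ifP => _; lia.
  rewrite -(nth_take x0 hl1) -(nth_take x0 hl2) E EW EW'.
  rewrite !nth_cat !size_cat /=; case: (ltnP i (size W1)) => his; solve_ifs.
    by rewrite addnK.
  have -> : i + (size W1 + size W2).+1 - (size W1 + size W2) - size W1 = (i - size W1).+1 by lia.
  by [].
- have sz := congr1 size E; rewrite size_takel // EW EW' !size_cat /= in sz.
  exists (size W1 + size W2); split; first lia.
  split; first lia.
  exists (size W1), (size W1 + size W2).+1, (size W1 + size W2); split; first by right.
  move=> i hi hs.
  have hl1 : i < l by lia.
  have hl2 : i + (if i < size W1 then (size W1 + size W2).+1 else size W1 + size W2) < l.
    case: ifP => _; lia.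
  rewrite -(nth_take x0 hl1) -(nth_take x0 hl2) E EW EW'.
  rewrite !nth_cat !size_cat /=; case: (ltnP i (size W1)) => his; solve_ifs.
    by congr nth; lia.
  have -> : i - size W1 = (i - size W1 - 1).+1 by lia.
  by simpl; congr nth; lia.
Qed.


Lemma pair_bound (w : seq T) a b : square_free w -> aspec w a -> aspec w b ->
  a + 2 <= b -> 4 * a <= 3 * b + 2.
Proof.
move=> sf [sa [s1 [t1 [t2 [ht1 r1]]]]] [sb [s2 [u1 [u2 [hu r2]]]]] hab.
rewrite leqNgt; apply/negP => hlt.
set D := b - a + 1.
have [base [hb [av1 av2]]] : exists base, base + D <= a /\
   (s1 < base \/ base + D <= s1) /\ (s2 < base \/ base + D <= s2).
  case H0: ((s1 < D) || (s2 < D)).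
    case H1: ((D <= s1 < 2 * D) || (D <= s2 < 2 * D)).
      exists (2 * D); move: H0 H1; rewrite /D; lia.
    exists D; move: H0 H1; rewrite /D; lia.
  exists 0; move: H0; rewrite /D; lia.
set T1 := if base < s1 then t1 else t2.
set T2 := if base < s2 then u1 else u2.
have e1 : forall k, k < D -> nth x0 w (base + k) = nth x0 w (base + k + T1).
  move=> k hk; rewrite r1; last 2 first.
  - lia.
  - apply/eqP; lia.
  rewrite /T1; congr (nth _ _ (_ + _)).
  case: av1 => h.
    by rewrite ifF ?ifF //; apply/negbTE; rewrite -leqNgt; lia.
  by rewrite ifT ?ifT //; lia.
have e2 : forall k, k < D -> nth x0 w (base + k) = nth x0 w (base + k + T2).
  move=> k hk; rewrite r2; last 2 first.
  - lia.
  - apply/eqP; lia.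
  rewrite /T2; congr (nth _ _ (_ + _)).
  case: av2 => h.
    by rewrite ifF ?ifF //; apply/negbTE; rewrite -leqNgt; lia.
  by rewrite ifT ?ifT //; lia.
have hT1 : T1 = a \/ T1 = a.+1 by rewrite /T1; case: ifP => _; lia.
have hT2 : T2 = b \/ T2 = b.+1 by rewrite /T2; case: ifP => _; lia.
apply: (@sq_nth w (base + T1) (T2 - T1) sf).
- lia.
- rewrite /D in hb; lia.
move=> k hk.
have hkD : k < D by rewrite /D; lia.
rewrite [base + T1 + k]addnAC -e1 // e2 //; congr nth; lia.
Qed.

Lemma triple_bound (w : seq T) a b c : square_free w -> aspec w a -> aspec w b ->
  aspec w c -> a < b -> b < c -> 10 * a <= 8 * c.
Proof.
move=> sf ha hb hc hab hbc.
have := @pair_bound w a c sf ha hc; lia.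
Qed.

End Comb.
Lemma expn_pow m k : expn m k = Nat.pow m k.
Proof. by elim: k => [|k IH] //; rewrite expnS IH. Qed.

Lemma count_bound (f : nat -> nat) k n :
  (forall j, j < k -> f j <= n) ->
  (forall i j, i < j -> j < k -> f i < f j) ->
  (0 < k -> 1 <= f 0) -> (1 < k -> odd (f 1)) ->
  (forall j, j.+2 < k -> 5 * (f j - 1) <= 4 * (f j.+2 - 1)) ->
  2 <= n -> expn 5 k < expn 4 k * expn n 2.
Proof.
move=> hn hinc h0 hodd h2 n2.
have inv : forall j, 1 <= j -> j < k -> expn 5 j.+1 < expn 4 j.+1 * expn (f j - 1) 2.
  elim/ltn_ind => j IH j1 jk.
  case: j IH j1 jk => [|[|[|i]]] IH j1 jk //.
  - have a0 := h0 (ltn_trans (ltnSn 0) jk).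
    have a1 := hinc 0 1 (ltnSn 0) jk.
    have o1 := hodd jk.
    have f13 : 3 <= f 1.
      move: o1; case E: (f 1) => [|[|m]] //; rewrite E in a1; lia.
    have : 2 <= f 1 - 1 by lia.
    move: (f 1 - 1) => x hx.
    have : expn 2 2 <= expn x 2 by rewrite leq_exp2r.
    lia.
  - have a0 := h0 (ltn_trans (ltnSn 0) (ltn_trans (ltnSn 1) jk)).
    have a1 := hinc 0 1 (ltnSn 0) (ltn_trans (ltnSn 1) jk).
    have a2 := hinc 1 2 (ltnSn 1) jk.
    have o1 := hodd (ltn_trans (ltnSn 1) jk).
    have f13 : 3 <= f 1.
      move: o1; case E: (f 1) => [|[|m]] //; rewrite E in a1; lia.
    have : 3 <= f 2 - 1 by lia.
    move: (f 2 - 1) => x hx.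
    have : expn 3 2 <= expn x 2 by rewrite leq_exp2r.
    lia.
  - have := IH i.+1 (ltnW (ltnSn _)) (ltn0Sn _) (ltn_trans (ltnSn _) (ltn_trans (ltnSn _) jk)).
    have := h2 i.+1 jk.
    move: (f i.+1 - 1) (f i.+3 - 1) => x y hxy.
    have -> : expn 5 i.+4 = 25 * expn 5 i.+2 by rewrite !expnS mulnA.
    have -> : expn 4 i.+4 = 16 * expn 4 i.+2 by rewrite !expnS mulnA.
    move: (expn 5 i.+2) (expn 4 i.+2) => A B hAB.
    have h1 : 25 * A < 25 * (B * expn x 2) by rewrite ltn_pmul2l.
    have h3 : 25 * (B * expn x 2) <= B * expn (4 * y) 2.
      rewrite mulnCA; apply: leq_mul => //.
      have -> : 25 * expn x 2 = expn (5 * x) 2 by rewrite expnMn.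
      by rewrite leq_exp2r.
    rewrite expnMn in h3.
    nia.
case: k hn hinc h0 hodd h2 inv => [|[|k]] hn hinc h0 hodd h2 inv.
- rewrite expn0 mul1n; nia.
- rewrite !expn1; nia.
- have := inv k.+1 (ltn0Sn _) (ltnSn _).
  have := hn k.+1 (ltnSn _).
  move: (f k.+1) => x hx h.
  apply: (leq_trans h); rewrite leq_mul2l; apply/orP; right.
  rewrite leq_exp2r //; lia.
Qed.

Lemma real_bound k n : expn 5 k < expn 4 k * expn n 2 -> 2 <= n ->
  (INR k < 2 * (ln (INR n) / ln (5/4)))%R.
Proof.
move=> h n2.
rewrite !expn_pow in h.
have l54 : (0 < ln (5/4))%R.
  rewrite -ln_1; apply: ln_increasing; lra.
have hR : (INR (5 ^ k) < INR (4 ^ k * n ^ 2))%R by apply: lt_INR; apply/ltP.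
rewrite mult_INR !pow_INR in hR.
have n0 : (0 < INR n)%R by apply: lt_0_INR; apply/ltP; lia.
have p4 : (0 < 4 ^ k)%R by apply: pow_lt; lra.
have hq : ((5/4) ^ k < INR n ^ 2)%R.
  have e : (INR 5 ^ k = (5/4) ^ k * 4 ^ k)%R.
    rewrite -Rpow_mult_distr; congr pow; simpl; lra.
  rewrite e in hR.
  have e4 : INR 4 = 4%R by simpl; lra.
  rewrite e4 in hR.
  nra.
have hl : (ln ((5/4) ^ k) < ln (INR n ^ 2))%R.
  apply: ln_increasing => //; apply: pow_lt; lra.
rewrite !ln_pow // in hl; last lra.
have -> : (2 * (ln (INR n) / ln (5 / 4)) = (INR 2 * ln (INR n)) / ln (5/4))%R.
  simpl; field; lra.
apply: (Rmult_lt_reg_r (ln (5/4))) => //.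
rewrite /Rdiv Rmult_assoc Rinv_l; lra.
Qed.

Theorem mainTheorem6 (T : eqType) (Q : seq T) :
  (2 <= size Q)%N -> square_free Q ->
  forall p : nat, (1 <= p <= size Q)%N ->
  forall ls : seq nat, uniq ls ->
    (forall l, l \in ls -> (p.-1 + l <= size Q)%N /\ almost_square (factor_at Q p l)) ->
    (INR (size ls) < 2 * (ln (INR (size Q)) / ln (5/4)))%R.
Proof.
move=> hn sf p hp ls uls hls.
have x0 : T by destruct Q as [|x ?]; [done | exact x].
set w := drop p.-1 Q.
have sfw : square_free w := @sf_drop T Q p.-1 sf.
have valid : forall l, l \in ls -> l <= size Q /\ exists h, l = 2 * h + 1 /\ @aspec T x0 w h.
  move=> l /hls [hl has]; split; first lia.
  apply: (@as_spec T x0 w l) => //.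
  rewrite /w size_drop; lia.
set s := sort leq ls.
pose f j := nth 0 s j.
have mem : forall j, j < size ls -> f j \in ls.
  by move=> j hj; rewrite -(mem_sort leq) mem_nth // size_sort.
have ss : sorted ltn s.
  by rewrite ltn_sorted_uniq_leq sort_uniq uls sort_sorted //; exact: leq_total.
have inc : forall i j, i < j -> j < size ls -> f i < f j.
  move=> i j ij jk; apply: (sorted_ltn_nth ltn_trans 0 ss) => //; rewrite inE size_sort //; lia.
apply: real_bound; last exact: hn.
apply: (@count_bound f) => //.
- by move=> j hj; case: (valid _ (mem _ hj)).
- move=> k0; case: (valid _ (mem _ k0)) => _ [h [-> _]]; lia.
- move=> k1; case: (valid _ (mem _ k1)) => _ [h [-> _]].
  by rewrite addn1 /= mul2n odd_double.
- move=> j hj.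
  have hj1 : j.+1 < size ls by lia.
  have hj0 : j < size ls by lia.
  case: (valid _ (mem _ hj)) => _ [c [Ec hc]].
  case: (valid _ (mem _ hj1)) => _ [b [Eb hb]].
  case: (valid _ (mem _ hj0)) => _ [a [Ea ha]].
  have i1 := inc j j.+1 (ltnSn _) hj1.
  have i2 := inc j.+1 j.+2 (ltnSn _) hj.
  rewrite Ea Eb Ec in i1 i2 *.
  have := @triple_bound T x0 w a b c sfw ha hb hc; lia.
Qed.
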